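(* Let $P$ be a finite set of real numbers with $0\in P$, and let $a=(a_n)$ be a sequence of real numbers such that $\sum_n a_n$ is absolutely convergent and $|a_n|\ge|a_{n+1}|>0$ for all $n\in\mathbb N$. Then there exists a sequence $((x_n,y_n))_n$ in $\mathbb R^2$ with $\sum_n(|x_n|+|y_n|)<\infty$ such that $E(x_n,y_n)_0=S(P,a)$.
   Context: For an absolutely convergent series $\sum_n v_n$ in $\mathbb R^2$, its achievement set is $E(v_n)=\{\sum_{n=1}^\infty \varepsilon_n v_n : (\varepsilon_n)\in\{0,1\}^{\mathbb N}\}$; $E(x_n,y_n)$ denotes the achievement set of $((x_n,y_n))_n$. For $A\subset\mathbb R^2$ and $c\in\mathbb R$, $A_c=\{s\in\mathbb R:(s,c)\in A\}$. The set of $P$-sums is $S(P,a)=\{\sum_{n=1}^\infty \varepsilon_n a_n : (\varepsilon_n)\in P^{\mathbb N}\}$. *)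

(* Defs.v *)
From Stdlib Require Import Reals List.
From Coquelicot Require Import Coquelicot.
Open Scope R_scope.

Definition achievement_set2 (x y : nat -> R) : R -> R -> Prop :=
  fun u v => exists eps : nat -> bool,
    is_series (fun n => if eps n then x n else 0) u /\
    is_series (fun n => if eps n then y n else 0) v.

Definition slice (A : R -> R -> Prop) (c : R) : R -> Prop := fun s => A s c.

Definition P_sums (P : list R) (a : nat -> R) : R -> Prop :=
  fun s => exists eps : nat -> R,
    (forall n, In (eps n) P) /\ is_series (fun n => eps n * a n) s.

(* Main.v *)
Require Import Defs.
From Stdlib Require Import Reals List Lia Lra ClassicalEpsilon.
From Coquelicot Require Import Coquelicot.
Open Scope R_scope.

Fixpoint psum (f : nat -> R) (k : nat) : R :=
  match k with O => 0 | S k' => psum f k' + f k' end.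

Lemma psum_sum_n f N : sum_n f N = psum f (S N).
Proof.
  induction N.
  - rewrite sum_O. simpl. rewrite Rplus_0_l. reflexivity.
  - rewrite sum_Sn, IHN. simpl. unfold plus; simpl. reflexivity.
Qed.

Lemma psum_add f m k : psum f (m + k) = psum f m + psum (fun j => f (m + j)%nat) k.
Proof.
  induction k; simpl.
  - rewrite Nat.add_0_r; ring.
  - rewrite Nat.add_succ_r. simpl. rewrite IHk. ring.
Qed.

Lemma psum_ext f g k : (forall j, (j < k)%nat -> f j = g j) -> psum f k = psum g k.
Proof.
  induction k; intros H; simpl; auto.
  rewrite IHk by (intros; apply H; lia). rewrite H by lia. auto.
Qed.

Lemma psum_scal f c k : psum (fun j => f j * c) k = psum f k * c.
Proof. induction k; simpl; [ring|rewrite IHk; ring]. Qed.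

Lemma psum_nonneg f k : (forall j, 0 <= f j) -> 0 <= psum f k.
Proof. intros H; induction k; simpl; [lra| specialize (H k); lra]. Qed.

Lemma psum_mono f k k' : (forall j, 0 <= f j) -> (k <= k')%nat -> psum f k <= psum f k'.
Proof.
  intros H Hk. replace k' with (k + (k' - k))%nat by lia.
  rewrite psum_add. pose proof (psum_nonneg (fun j => f (k+j)%nat) (k'-k) (fun j => H _)). lra.
Qed.

Definition blocksum (B : nat) (f : nat -> R) (n : nat) : R :=
  psum (fun j => f (n * B + j)%nat) B.

Lemma psum_block B f N : psum f (N * B) = psum (blocksum B f) N.
Proof.
  induction N; simpl; auto.
  replace (B + N * B)%nat with (N * B + B)%nat by lia.
  rewrite psum_add, IHN. reflexivity.
Qed.

Lemma ser_lim a l : is_series a l <-> is_lim_seq (sum_n a) l.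
Proof. split; auto. Qed.

Lemma block_sub B f (HB : (1 <= B)%nat) N :
  sum_n f (S N * B - 1)%nat = sum_n (blocksum B f) N.
Proof.
  rewrite !psum_sum_n. replace (S (S N * B - 1)) with (S N * B)%nat.
  - apply psum_block.
  - simpl. lia.
Qed.

Lemma block_series_B B f l (HB : (1 <= B)%nat) :
  is_series f l -> is_series (blocksum B f) l.
Proof.
  intros H. apply ser_lim in H. apply ser_lim.
  eapply is_lim_seq_ext; [intros N; apply block_sub; auto|].
  apply (is_lim_seq_subseq (sum_n f) l (fun N => (S N * B - 1)%nat)); auto.
  apply eventually_subseq. intros n. simpl. nia.
Qed.

Lemma block_series_A B f l (HB : (1 <= B)%nat) :
  ex_series f -> is_series (blocksum B f) l -> is_series f l.
Proof.
  intros [l' H] H2.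
  pose proof (block_series_B B f l' HB H) as H3.
  apply is_series_unique in H2. apply is_series_unique in H3.
  assert (l = l') by congruence. subst. auto.
Qed.

Lemma block_ex_nonneg B h (HB : (1 <= B)%nat) :
  (forall i, 0 <= h i) -> ex_series (blocksum B h) -> ex_series h.
Proof.
  intros Hh [l H].
  assert (Hb : forall n, 0 <= blocksum B h n).
  { intros n. apply psum_nonneg. auto. }
  destruct (ex_finite_lim_seq_incr (sum_n h) l) as [l' Hl].
  - intros n. rewrite sum_Sn. unfold plus; simpl. specialize (Hh (S n)). lra.
  - intros n. rewrite psum_sum_n.
    apply Rle_trans with (psum h (S n * B)).
    + apply psum_mono; auto. nia.
    + rewrite psum_block. rewrite <- psum_sum_n.
      apply (is_lim_seq_incr_compare (sum_n (blocksum B h)) l); auto.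
      intros k. rewrite sum_Sn. unfold plus; simpl. specialize (Hb (S k)). lra.
  - exists l'. apply ser_lim. auto.
Qed.

Lemma normR (x : R) : norm x = Rabs x.
Proof. reflexivity. Qed.

Lemma key0 (K : nat) (m : nat -> R) (Hm : forall n, Rabs (m n) <= INR K) :
  is_series (fun n => m n * (/ (INR K + 2)) ^ n) 0 ->
  Rabs (m 0%nat) <= INR K / (INR K + 1).
Proof.
  intros H.
  set (r := / (INR K + 2)) in *.
  assert (HK : 0 <= INR K) by apply pos_INR.
  assert (Hr0 : 0 < r) by (unfold r; apply Rinv_0_lt_compat; lra).
  assert (Hr1 : r < 1).
  { unfold r. rewrite <- Rinv_1. apply Rinv_lt_contravar; lra. }
  set (T := fun k => m (S k) * r ^ (S k)).
  assert (HT : is_series T (- m 0%nat)).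
  { unfold T. apply (is_series_incr_1 (fun n => m n * r ^ n)).
    match goal with |- is_series _ ?x => assert (E : x = 0) by
      (unfold plus; simpl; rewrite Rmult_1_r, Rplus_opp_l; reflexivity); rewrite E; exact H end. }
  set (G := fun k => INR K * r * r ^ k).
  assert (HG : is_series G (INR K * r * / (1 - r))).
  { unfold G. apply (is_series_scal (INR K * r) (fun k => r ^ k)).
    apply is_series_geom. rewrite Rabs_pos_eq; lra. }
  assert (HTG : forall k, 0 <= Rabs (T k) <= G k).
  { intros k. split; [apply Rabs_pos|]. unfold T, G.
    rewrite Rabs_mult, (Rabs_pos_eq (r ^ S k)) by (apply pow_le; lra).
    simpl. specialize (Hm (S k)).
    assert (0 <= r ^ k) by (apply pow_le; lra).
    assert (0 <= r * r ^ k) by (apply Rmult_le_pos; lra).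
    replace (INR K * r * r ^ k) with (INR K * (r * r ^ k)) by ring.
    apply Rmult_le_compat_r; auto. }
  assert (HexG : ex_series G) by (eexists; eauto).
  assert (HexT : ex_series (fun k => Rabs (T k))).
  { apply (@ex_series_le R_AbsRing R_CompleteNormedModule _ G); auto. intros k. rewrite normR, Rabs_Rabsolu. apply HTG. }
  pose proof (Series_Rabs T HexT) as H1.
  pose proof (Series_le _ _ HTG HexG) as H2.
  rewrite (is_series_unique _ _ HT) in H1.
  rewrite (is_series_unique _ _ HG) in H2.
  rewrite Rabs_Ropp in H1.
  replace (INR K / (INR K + 1)) with (INR K * r * / (1 - r)); [lra|].
  unfold r. field. lra.
Qed.

Lemma key_all (K : nat) (m : nat -> R) (Hm : forall n, Rabs (m n) <= INR K)
  (Hint : forall n, exists c b : nat, m n = INR c - INR b) :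
  is_series (fun n => m n * (/ (INR K + 2)) ^ n) 0 -> forall n, m n = 0.
Proof.
  intros H.
  set (r := / (INR K + 2)) in *.
  assert (HK : 0 <= INR K) by apply pos_INR.
  assert (Hr0 : 0 < r) by (unfold r; apply Rinv_0_lt_compat; lra).
  assert (Z : forall N, is_series (fun n => m (N + n)%nat * r ^ n) 0 -> m N = 0).
  { intros N Hs.
    pose proof (key0 K (fun n => m (N + n)%nat) (fun n => Hm _) Hs) as Hb.
    simpl in Hb. rewrite Nat.add_0_r in Hb. destruct (Hint N) as (c & b & Hcb).
    assert (INR K / (INR K + 1) < 1).
    { apply (Rmult_lt_reg_r (INR K + 1)); [lra|]. unfold Rdiv.
      rewrite Rmult_assoc, Rinv_l by lra. lra. }
    rewrite Hcb in Hb |- *.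
    assert (Hlt1 : Rabs (INR c - INR b) < 1) by lra.
    apply Rabs_def2 in Hlt1.
    destruct (Nat.lt_trichotomy c b) as [Hlt|[Heq|Hgt]].
    + apply le_INR in Hlt. rewrite S_INR in Hlt. lra.
    + subst. ring.
    + apply le_INR in Hgt. rewrite S_INR in Hgt. lra. }
  assert (Q : forall N, is_series (fun n => m (N + n)%nat * r ^ n) 0).
  { induction N.
    - simpl. auto.
    - pose proof (Z N IHN) as HmN.
      assert (H1 : is_series (fun k => m (N + S k)%nat * r ^ (S k)) 0).
      { apply (is_series_incr_1 (fun n => m (N + n)%nat * r ^ n)).
        match goal with |- is_series _ ?x => assert (E : x = 0) by
          (unfold plus; simpl; rewrite Nat.add_0_r, HmN; ring); rewrite E; exact IHN end. }
      apply (is_series_scal (/ r)) in H1.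
      match type of H1 with is_series _ ?x => assert (E2 : x = 0) by
        (unfold scal; simpl; unfold mult; simpl; ring); rewrite E2 in H1 end.
      eapply is_series_ext; [|exact H1].
      intros n. unfold scal; simpl; unfold mult; simpl.
      rewrite Nat.add_succ_r. field. lra. }
  intros n. apply Z, Q.
Qed.
Lemma idx_div L n j : (j < S L)%nat ->
  ((n * S L + j) / S L = n)%nat /\ ((n * S L + j) mod S L = j)%nat.
Proof.
  intros Hj. assert (E : ((n * S L + j) / S L = n)%nat).
  { rewrite Nat.div_add_l by lia. rewrite Nat.div_small by lia. lia. }
  split; auto. rewrite Nat.Div0.mod_eq. rewrite E. lia.
Qed.

Lemma blocksum_split L f n :
  blocksum (S L) f n = psum (fun j => f (n * S L + j)%nat) L + f (n * S L + L)%nat.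
Proof. reflexivity. Qed.

Fixpoint ncount (g : nat -> bool) (k : nat) : nat :=
  match k with O => O | S k' => (ncount g k' + if g k' then 1 else 0)%nat end.

Lemma ncount_le g k : (ncount g k <= k)%nat.
Proof. induction k; simpl; [lia|destruct (g k); lia]. Qed.

Lemma psum_ind (g : nat -> bool) (c : R) k : psum (fun j => if g j then c else 0) k = INR (ncount g k) * c.
Proof.
  induction k; simpl; [ring|]. rewrite IHk, plus_INR. destruct (g k); simpl; ring.
Qed.

Lemma psum_plus (f g : nat -> R) k : psum (fun j => f j + g j) k = psum f k + psum g k.
Proof. induction k; simpl; [ring|rewrite IHk; ring]. Qed.

Lemma psum_const c k : psum (fun _ => c) k = INR k * c.
Proof. induction k; simpl psum; [simpl; ring|rewrite IHk, S_INR; ring]. Qed.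

Lemma psum_delta (f : nat -> R) t k : psum (fun j => if Nat.eqb j t then f j else 0) k =
  if Nat.ltb t k then f t else 0.
Proof.
  induction k; simpl; [ring|]. rewrite IHk.
  destruct (Nat.eqb_spec k t); destruct (Nat.ltb_spec t k); destruct (Nat.ltb_spec t (S k));
   subst; try lia; ring.
Qed.

Lemma psum_zero_cnt (g : nat -> bool) (f : nat -> R) k : ncount g k = O -> psum (fun j => if g j then f j else 0) k = 0.
Proof.
  induction k; simpl; auto. intros H. destruct (g k); [lia|]. rewrite IHk by lia. ring.
Qed.

Lemma psum_sel_in (P : list R) (g : nat -> bool) (f : nat -> R) k : In 0 P -> (forall j, (j < k)%nat -> In (f j) P) ->
  (ncount g k <= 1)%nat -> In (psum (fun j => if g j then f j else 0) k) P.
Proof.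
  intros H0 Hf. induction k; simpl; auto. intros Hc.
  destruct (g k) eqn:Eg.
  - rewrite psum_zero_cnt by lia. rewrite Rplus_0_l. apply Hf. lia.
  - rewrite Rplus_0_r. apply IHk; [intros; apply Hf; lia| lia].
Qed.

Definition xs_ (P : list R) (a : nat -> R) (i : nat) : R :=
  if Nat.ltb (i mod S (length P)) (length P)
  then nth (i mod S (length P)) P 0 * a (i / S (length P))%nat else 0.

Definition ys_ (L : nat) (i : nat) : R :=
  if Nat.ltb (i mod S L) L then (/ (INR L + 2)) ^ (i / S L)
  else - (/ (INR L + 2)) ^ (i / S L).

Lemma x_at P a n j : (j < length P)%nat ->
  xs_ P a (n * S (length P) + j) = nth j P 0 * a n.
Proof.
  intros Hj. unfold xs_. destruct (idx_div (length P) n j) as [E1 E2]; [lia|].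
  rewrite E1, E2. destruct (Nat.ltb_spec j (length P)); [auto|lia].
Qed.

Lemma x_last P a n : xs_ P a (n * S (length P) + length P) = 0.
Proof.
  unfold xs_. destruct (idx_div (length P) n (length P)) as [E1 E2]; [lia|].
  rewrite E2. destruct (Nat.ltb_spec (length P) (length P)); [lia|auto].
Qed.

Lemma y_at L n j : (j < L)%nat -> ys_ L (n * S L + j) = (/ (INR L + 2)) ^ n.
Proof.
  intros Hj. unfold ys_. destruct (idx_div L n j) as [E1 E2]; [lia|].
  rewrite E1, E2. destruct (Nat.ltb_spec j L); [auto|lia].
Qed.

Lemma y_last L n : ys_ L (n * S L + L) = - (/ (INR L + 2)) ^ n.
Proof.
  unfold ys_. destruct (idx_div L n L) as [E1 E2]; [lia|].
  rewrite E1, E2. destruct (Nat.ltb_spec L L); [lia|auto].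
Qed.

Lemma ex_lin (u v : nat -> R) C D : ex_series u -> ex_series v ->
  ex_series (fun n => C * u n + D * v n).
Proof.
  intros Hu Hv.
  destruct (ex_series_plus _ _ (ex_series_scal C u Hu) (ex_series_scal D v Hv)) as [l Hl].
  exists l. eapply is_series_ext; [|exact Hl]. intros n. reflexivity.
Qed.

Lemma rpos L : 0 < / (INR L + 2) < 1.
Proof.
  assert (0 <= INR L) by apply pos_INR. split.
  - apply Rinv_0_lt_compat; lra.
  - rewrite <- Rinv_1. apply Rinv_lt_contravar; lra.
Qed.

Lemma abs_part (P : list R) (a : nat -> R) :
  ex_series (fun n => Rabs (a n)) ->
  ex_series (fun n => Rabs (xs_ P a n) + Rabs (ys_ (length P) n)).
Proof.
  intros Ha. set (L := length P). set (r := / (INR L + 2)).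
  apply (block_ex_nonneg (S L)); [lia| intros; pose proof (Rabs_pos (xs_ P a i));
    pose proof (Rabs_pos (ys_ L i)); lra|].
  assert (Hr := rpos L). fold r in Hr.
  assert (E : forall n, blocksum (S L) (fun n => Rabs (xs_ P a n) + Rabs (ys_ L n)) n =
     psum (fun j => Rabs (nth j P 0)) L * Rabs (a n) + (INR L + 1) * r ^ n).
  { intros n. rewrite blocksum_split. unfold L. rewrite x_last, y_last.
    rewrite (psum_ext _ (fun j => Rabs (nth j P 0) * Rabs (a n) + r ^ n)).
    - rewrite psum_plus, psum_scal, psum_const. rewrite Rabs_R0, Rabs_Ropp.
      rewrite (Rabs_pos_eq (_ ^ n)) by (apply pow_le, Rlt_le, rpos). fold L. unfold r. ring.
    - intros j Hj. rewrite x_at, y_at by auto. rewrite Rabs_mult.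
      rewrite (Rabs_pos_eq (_ ^ n)) by (apply pow_le, Rlt_le, rpos). reflexivity. }
  destruct (ex_lin _ _ (psum (fun j => Rabs (nth j P 0)) L) (INR L + 1) Ha
     (ex_series_geom r ltac:(rewrite Rabs_pos_eq; lra))) as [l Hl].
  exists l. eapply is_series_ext; [|exact Hl]. intros n. rewrite E. reflexivity.
Qed.

Lemma fwd (P : list R) (a : nat -> R) (hP0 : In 0 P) (eps : nat -> bool) s :
  is_series (fun n => if eps n then xs_ P a n else 0) s ->
  is_series (fun n => if eps n then ys_ (length P) n else 0) 0 ->
  P_sums P a s.
Proof.
  intros H1 H2. set (L := length P) in *.
  assert (HL : (1 <= L)%nat) by (unfold L; destruct P; [contradiction|simpl; lia]).
  apply (block_series_B (S L)) in H1; [|lia].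
  apply (block_series_B (S L)) in H2; [|lia].
  set (r := / (INR L + 2)).
  set (cnt := fun n => ncount (fun j => eps (n * S L + j)%nat) L).
  set (bn := fun n => if eps (n * S L + L)%nat then 1%nat else 0%nat).
  assert (Ey : forall n, blocksum (S L) (fun n => if eps n then ys_ L n else 0) n
               = (INR (cnt n) - INR (bn n)) * r ^ n).
  { intros n. rewrite blocksum_split.
    rewrite (psum_ext _ (fun j => if eps (n * S L + j)%nat then r ^ n else 0)).
    - rewrite psum_ind. rewrite y_last. unfold bn, cnt.
      destruct (eps (n * S L + L)%nat); simpl; unfold r; ring.
    - intros j Hj. rewrite y_at by auto. reflexivity. }
  assert (Hk : forall n, INR (cnt n) - INR (bn n) = 0).
  { apply (key_all L (fun n => INR (cnt n) - INR (bn n))).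
    - intros n. apply Rabs_le.
      assert (INR (cnt n) <= INR L) by (apply le_INR, ncount_le).
      assert (INR (bn n) <= 1) by (unfold bn; destruct (eps _); simpl; lra).
      assert (0 <= INR (cnt n)) by apply pos_INR.
      assert (0 <= INR (bn n)) by apply pos_INR.
      apply le_INR in HL. simpl in HL. lra.
    - intros n. eauto.
    - eapply is_series_ext; [|exact H2]. intros n. rewrite Ey. reflexivity. }
  assert (Hc : forall n, (cnt n <= 1)%nat).
  { intros n. specialize (Hk n). assert (E : cnt n = bn n) by (apply INR_eq; lra).
    rewrite E. unfold bn. destruct (eps _); lia. }
  exists (fun n => psum (fun j => if eps (n * S L + j)%nat then nth j P 0 else 0) L).
  split.
  - intros n. apply (psum_sel_in P (fun j => eps (n * S L + j)%nat) (fun j => nth j P 0) L hP0).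
    + intros j Hj. apply nth_In. auto.
    + exact (Hc n).
  - eapply is_series_ext; [|exact H1]. intros n. simpl.
    rewrite blocksum_split. unfold L. rewrite x_last.
    rewrite <- psum_scal. destruct (eps _); rewrite Rplus_0_r; apply psum_ext;
    intros j Hj; rewrite x_at by auto; destruct (eps _); ring.
Qed.

Lemma eps_at (idx : nat -> nat) L n j : (j < S L)%nat ->
  (Nat.eqb ((n * S L + j) mod S L)%nat (idx ((n * S L + j) / S L)%nat) ||
   Nat.eqb ((n * S L + j) mod S L)%nat L)%bool = (Nat.eqb j (idx n) || Nat.eqb j L)%bool.
Proof. intros Hj. destruct (idx_div L n j Hj) as [E1 E2]. rewrite E1, E2. reflexivity. Qed.

Lemma bwd (P : list R) (a : nat -> R) (ha_abs : ex_series (fun n => Rabs (a n))) s :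
  P_sums P a s -> exists eps : nat -> bool,
  is_series (fun n => if eps n then xs_ P a n else 0) s /\
  is_series (fun n => if eps n then ys_ (length P) n else 0) 0.
Proof.
  intros [e [He Hs]]. set (L := length P).
  assert (Hidx : forall n, {j | (j < L)%nat /\ nth j P 0 = e n}) by
    (intros n; apply constructive_indefinite_description, In_nth, He).
  set (idx := fun n => proj1_sig (Hidx n)).
  assert (Hi1 : forall n, (idx n < L)%nat) by (intros n; apply (proj2_sig (Hidx n))).
  assert (Hi2 : forall n, nth (idx n) P 0 = e n) by (intros n; apply (proj2_sig (Hidx n))).
  pose proof (abs_part P a ha_abs) as Habs.
  exists (fun i => Nat.eqb (i mod S L)%nat (idx (i / S L)%nat) || Nat.eqb (i mod S L)%nat L)%bool.
  split.
  - apply (block_series_A (S L)); [lia| |].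
    + refine (@ex_series_le R_AbsRing R_CompleteNormedModule _ _ _ Habs).
      intros i. rewrite normR. unfold L. destruct (_ || _)%bool.
      * pose proof (Rabs_pos (ys_ (length P) i)). lra.
      * rewrite Rabs_R0. pose proof (Rabs_pos (ys_ (length P) i)).
        pose proof (Rabs_pos (xs_ P a i)). lra.
    + eapply is_series_ext; [|exact Hs]. intros n. cbv beta.
      rewrite blocksum_split. rewrite eps_at by lia. unfold L. rewrite x_last.
      rewrite (psum_ext _ (fun j => if Nat.eqb j (idx n) then nth j P 0 * a n else 0)).
      * rewrite psum_delta. destruct (Nat.ltb_spec (idx n) (length P)).
        -- rewrite Hi2, Nat.eqb_refl, Bool.orb_true_r, Rplus_0_r. reflexivity.
        -- specialize (Hi1 n). unfold L in Hi1. lia.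
      * intros j Hj. rewrite eps_at by lia. rewrite x_at by auto.
        destruct (Nat.eqb_spec j (length P)); [lia|]. rewrite Bool.orb_false_r. reflexivity.
  - apply (block_series_A (S L)); [lia| |].
    + refine (@ex_series_le R_AbsRing R_CompleteNormedModule _ _ _ Habs).
      intros i. rewrite normR. unfold L. destruct (_ || _)%bool.
      * pose proof (Rabs_pos (xs_ P a i)). lra.
      * rewrite Rabs_R0. pose proof (Rabs_pos (ys_ (length P) i)).
        pose proof (Rabs_pos (xs_ P a i)). lra.
    + pose proof (is_series_scal 0 _ _ Hs) as H0.
      match type of H0 with is_series _ ?x => assert (E : x = 0) by
        (unfold scal; simpl; unfold mult; simpl; ring); rewrite E in H0 end.
      eapply is_series_ext; [|exact H0]. intros n. cbv beta.
      rewrite blocksum_split. rewrite eps_at by lia. rewrite y_last.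
      rewrite (psum_ext _ (fun j => if Nat.eqb j (idx n) then (/ (INR L + 2)) ^ n else 0)).
      * rewrite psum_delta. destruct (Nat.ltb_spec (idx n) L).
        -- rewrite Nat.eqb_refl. rewrite Bool.orb_true_r. unfold scal; simpl; unfold mult; simpl. ring.
        -- specialize (Hi1 n). lia.
      * intros j Hj. rewrite eps_at by lia. rewrite y_at by auto.
        destruct (Nat.eqb_spec j L); [lia|]. rewrite Bool.orb_false_r. reflexivity.
Qed.

Theorem theorem4p1 (P : list R) (a : nat -> R)
  (hP0 : In 0 P)
  (ha_abs : ex_series (fun n => Rabs (a n)))
  (ha_mono : forall n, Rabs (a n) >= Rabs (a (S n)) /\ Rabs (a (S n)) > 0) :
  exists x y : nat -> R,
    ex_series (fun n => Rabs (x n) + Rabs (y n)) /\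
    (forall s, slice (achievement_set2 x y) 0 s <-> P_sums P a s).
Proof.
  exists (xs_ P a), (ys_ (length P)). split.
  - apply abs_part; auto.
  - intros s. unfold slice, achievement_set2. split.
    + intros [eps [H1 H2]]. eapply fwd; eauto.
    + intros H. apply bwd; auto.
Qed.
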